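(* Let a pebble placement strategy $\Lambda$ be fixed: for every instance (a connected simple undirected anonymous graph $G$ with port numbers, a source node $s$ and a treasure node $t$), $\Lambda$ places classical pebbles on some set of nodes of $G$. Then there is no deterministic treasure hunt algorithm for an oblivious agent that, for every instance, brings the agent from $s$ to the treasure $t$ when pebbles are placed according to $\Lambda$. That is, for every deterministic oblivious agent algorithm there is an instance on which the agent never reaches the treasure.
   Context: An anonymous graph is a connected simple undirected graph whose nodes are unlabelled and indistinguishable; at each node $v$ the incident edges carry distinct local labels (port numbers) from $\{0,\dots,\deg(v)-1\}$, so each edge has two independent port numbers, one at each endpoint. An agent starts at a source node $s$ and must reach a stationary target node $t$ (the treasure). The agent acts in rounds; in each round it ''looks'' (learns the degree of its current node and whether a pebble is present there), computes, and then either moves along one chosen port or stays. A pebble is a permanent classical marker placed on a node by an oracle (the pebble placement strategy) before the search, with knowledge of the whole instance. The agent is oblivious: it remembers nothing from previous rounds, so in a deterministic algorithm its action in a round is a function only of the degree of the current node and whether the current node carries a pebble. *)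

(* Defs.v *)
From mathcomp Require Import all_boot.
Set Implicit Arguments. Unset Strict Implicit. Unset Printing Implicit Defensive.

Record PGraph := mkPGraph {
  V : finType;
  deg : V -> nat;
  nbr : forall v : V, 'I_(deg v) -> V
}.

Definition adj (G : PGraph) : rel (V G) :=
  fun u w => [exists i : 'I_(deg u), @nbr G u i == w].

(* Well-formed instance graph: simple (no loops, no multi-edges: distinct ports
   lead to distinct neighbours), undirected (every edge is seen from both ends,
   so the port at the other endpoint is the unique j with nbr j = v), connected. *)
Definition simple_connected (G : PGraph) : Prop :=
  [/\ (forall (v : V G) (i : 'I_(deg v)), @nbr G v i <> v),
      (forall (v : V G) (i j : 'I_(deg v)), @nbr G v i = @nbr G v j -> i = j),
      (forall (v : V G) (i : 'I_(deg v)),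
          exists j : 'I_(deg (@nbr G v i)), @nbr G (@nbr G v i) j = v)
    & (forall u w : V G, connect (@adj G) u w)].

Definition pebble_strategy :=
  forall (G : PGraph) (s t : V G), {set V G}.

(* A deterministic oblivious agent: its action depends only on the degree d of
   the current node and on whether a pebble is present; it either stays (None)
   or moves along a port in {0, ..., d-1}. *)
Definition oblivious_algo := forall d : nat, bool -> option 'I_d.

Definition step (G : PGraph) (P : {set V G}) (A : oblivious_algo) (v : V G) : V G :=
  match A (deg v) (v \in P) with
  | None => v
  | Some i => @nbr G v i
  end.

Definition pos (G : PGraph) (P : {set V G}) (A : oblivious_algo) (s : V G) (k : nat) : V G :=
  iter k (@step G P A) s.

(* Main.v *)
Require Import Defs.
From mathcomp Require Import all_boot.

Definition star_deg (v : 'I_4) : nat := if v == ord0 then 3 else 1.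
Definition leaf (k : nat) : 'I_4 :=
  match k with 0 => @Ordinal 4 1 isT | 1 => @Ordinal 4 2 isT | _ => @Ordinal 4 3 isT end.
Definition star_nbr (v : 'I_4) (i : 'I_(star_deg v)) : 'I_4 :=
  if v == ord0 then leaf i else ord0.
Definition star : PGraph := @mkPGraph 'I_4 star_deg star_nbr.

Lemma star_ok : simple_connected star.
Proof.
split.
- case=> [[|[|[|[|?]]]] ?] //= i; rewrite /star_nbr /=.
  by case: i => [[|[|[|?]]] ?].
- case=> [[|[|[|[|?]]]] ?] //= i j; rewrite /star_nbr /=.
  + by case: i j => [[|[|[|?]]] ?] [[|[|[|?]]] ?] //= _; apply: val_inj.
  1-3: move=> _; apply: val_inj; case: i j => i hi [j hj] /=; move: hi hj;
    by rewrite /star_deg /= !ltnS !leqn0 => /eqP -> /eqP ->.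
- case=> [[|[|[|[|?]]]] ?] //= i.
  + case: i => [[|[|[|?]]] ?] //=.
    * by exists (ord0 : 'I_1); apply: val_inj.
    * by exists (ord0 : 'I_1); apply: val_inj.
    * by exists (ord0 : 'I_1); apply: val_inj.
  + by exists (@Ordinal 3 0 isT); apply: val_inj.
  + by exists (@Ordinal 3 1 isT); apply: val_inj.
  + by exists (@Ordinal 3 2 isT); apply: val_inj.
- have h0 : forall u : 'I_4, connect (@adj star) u ord0 /\ connect (@adj star) ord0 u.
    case=> [[|[|[|[|?]]]] i] //=.
      by have -> : Ordinal i = ord0 by apply: val_inj. 
    - by split; apply: connect1; apply/existsP;
        [exists (@Ordinal 1 0 isT) | exists (@Ordinal 3 0 isT)].
    - by split; apply: connect1; apply/existsP;
        [exists (@Ordinal 1 0 isT) | exists (@Ordinal 3 1 isT)].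
    - by split; apply: connect1; apply/existsP;
        [exists (@Ordinal 1 0 isT) | exists (@Ordinal 3 2 isT)].
  move=> u w; apply: connect_trans (proj1 (h0 u)) (proj2 (h0 w)).
Qed.

Lemma leaf_inj (i q : 'I_3) : leaf i = leaf q -> i = q.
Proof.
by case: i q => [[|[|[|?]]] ?] [[|[|[|?]]] ?] //= _; apply: val_inj.
Qed.

Lemma inv (A : oblivious_algo) (q : 'I_3) (P : {set 'I_4}) :
  A 3 false != Some q -> A 3 true != Some q ->
  forall v : 'I_4, v != leaf q -> @step star P A v != leaf q.
Proof.
move=> h1 h2; case=> [[|[|[|[|?]]]] i] //= hv; rewrite /step /=.
- have : A 3 (Ordinal i \in P) != Some q by case: (Ordinal i \in P).
  case: (A 3 _) => [j|] // hj; apply/eqP => /leaf_inj e; move: hj; rewrite e eqxx.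
  done.
all: by case: (A _ _) => [j|] //; case: q {h1 h2 hv} => [[|[|[|?]]] ?].
Qed.

Theorem theorem1 :
  forall (Lambda : pebble_strategy) (A : oblivious_algo),
    exists (G : PGraph) (s t : V G),
      simple_connected G /\
      forall k : nat, pos (Lambda G s t) A s k <> t.
Proof.
move=> Lambda A.
have [q [h1 h2]] : exists q : 'I_3, A 3 false != Some q /\ A 3 true != Some q.
  case: (A 3 false) => [[[|[|[|?]]] ?]|] //; case: (A 3 true) => [[[|[|[|?]]] ?]|] //.
  1-16: first [by exists (@Ordinal 3 0 isT) | by exists (@Ordinal 3 1 isT)
             | by exists (@Ordinal 3 2 isT)].
exists star, (leaf (if val q == 0 then 1 else 0)), (leaf q); split; first exact: star_ok.
move=> k; apply/eqP; elim: k => [|k IH].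
  by case: q {h1 h2} => [[|[|[|?]]] ?].
rewrite /pos iterS; exact: inv.
Qed.
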